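(* For all $n\in\mathbb N$ the following hold in the $q$-shuffle algebra $\mathbb V$: $$G_n=q^{2n}D_n+q^2\sum_{\substack{i+j+k+1=n\\ i,j,k\ge0}}W_{-i}\star D_j\star W_{k+1},$$ $$G_n=q^{-2n}D_n+\sum_{\substack{i+j+k+1=n\\ i,j,k\ge0}}W_{k+1}\star D_j\star W_{-i}.$$
   Context: Let $\mathbb F$ be a field and let $q\in\mathbb F$ be nonzero and not a root of unity. Let $\mathbb V$ be the free associative $\mathbb F$-algebra on noncommuting $x,y$, with basis the words (including $1$). Juxtaposition denotes concatenation. Set $\langle x,x\rangle=\langle y,y\rangle=2$ and $\langle x,y\rangle=\langle y,x\rangle=-2$. The $q$-shuffle product $\star$ is the bilinear product determined as follows: - $1\star v=v\star 1=v$; - for nontrivial words $u=u_1\cdots u_r$ and $v=v_1\cdots v_s$, $$u\star v=u_1((u_2\cdots u_r)\star v)+v_1(u\star(v_2\cdots v_s))q^{\langle u_1,v_1\rangle+\cdots+\langle u_r,v_1\rangle}.$$ This makes $\mathbb V$ an associative algebra, the $q$-shuffle algebra. For $k\in\mathbb N$: - $W_{-k}=xyx\cdots x$ is the alternating word of length $2k+1$ beginning and ending with $x$; - $W_{k+1}=yxy\cdots y$ is the alternating word of length $2k+1$ beginning and ending with $y$; - $G_k=yxyx\cdots yx$ is the word of length $2k$; - $\tilde G_k=xyxy\cdots xy$ is the word of length $2k$; - $G_0=\tilde G_0=1$. Define $\{D_n\}_{n\in\mathbb N}\subseteq\mathbb V$ recursively by $D_0=1$ and, for $n\ge1$, $\sum_{i=0}^n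 D_i\star\tilde G_{n-i}=0$. *)

(* Defs.v *)
From mathcomp Require Import all_boot all_order all_algebra.
Set Implicit Arguments. Unset Strict Implicit. Unset Printing Implicit Defensive.
Import GRing.Theory Num.Theory.
Local Open Scope ring_scope.

Definition lx : bool := false.
Definition ly : bool := true.
Definition word := seq bool.

Section QShuffle.
Variables (F : fieldType) (q : F).

(* An element of the free algebra V is represented by a formal finite
   linear combination of words (a list of (coefficient, word) pairs);
   two representations denote the same element iff all coefficients agree. *)
Definition V := seq (F * word).

Definition coef (v : V) (w : word) : F :=
  \sum_(p <- v) (if p.2 == w then p.1 else 0).

Definition veq (u v : V) : Prop := forall w, coef u w = coef v w.

Definition vword (w : word) : V := [:: (1, w)].
Definition vadd (u v : V) : V := u ++ v.
Definition vscale (c : F) (v : V) : V := [seq (c * p.1, p.2) | p <- v].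
Definition vsum (I : Type) (s : seq I) (f : I -> V) : V := flatten (map f s).

Definition pair_form (a b : bool) : int := if a == b then 2%:Z else - (2%:Z).

Fixpoint shw (u : word) : word -> V :=
  match u with
  | [::] => fun v => [:: (1, v)]
  | a :: u' =>
      fix g (v : word) : V :=
        match v with
        | [::] => [:: (1, a :: u')]
        | b :: v' =>
            [seq (p.1, a :: p.2) | p <- shw u' (b :: v')] ++
            [seq (p.1 * q ^ (\sum_(c <- a :: u') pair_form c b), b :: p.2)
               | p <- g v']
        end
  end.

Definition star (u v : V) : V :=
  flatten [seq [seq (a.1 * b.1 * p.1, p.2) | p <- shw a.2 b.2] | a <- u, b <- v].

Definition alt (a : bool) (len : nat) : word := mkseq (fun i => addb a (odd i)) len.

Definition Wneg (k : nat) : V := vword (alt lx (2 * k).+1).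
Definition Wpos (k : nat) : V := vword (alt ly (2 * k).+1).   (* W_{k+1} *)
Definition Gw (k : nat) : V := vword (alt ly (2 * k)).
Definition Gtw (k : nat) : V := vword (alt lx (2 * k)).

(* D_0 = 1, D_n = - sum_{i<n} D_i * \tilde G_{n-i}  (equivalent to
   sum_{i=0}^n D_i * \tilde G_{n-i} = 0 since \tilde G_0 = 1). *)
Fixpoint Ds (n : nat) : seq V :=
  match n with
  | 0 => [:: vword [::]]
  | n'.+1 =>
      let s := Ds n' in
      rcons s (vscale (-1) (vsum (iota 0 n'.+1)
                              (fun i => star (nth [::] s i) (Gtw (n'.+1 - i)))))
  end.

Definition D (n : nat) : V := nth [::] (Ds n) n.

Definition triple_sum (n : nat) (f : nat -> nat -> nat -> V) : V :=
  vsum (iota 0 n.+1) (fun i => vsum (iota 0 n.+1) (fun j => vsum (iota 0 n.+1)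
    (fun k => if (i + j + k).+1 == n then f i j k else [::]))).

End QShuffle.

(* Main.v *)
Require Import Defs.
From HB Require Import structures.
From mathcomp Require Import all_boot all_order all_algebra.
From mathcomp Require Import boolp zify.
Set Implicit Arguments. Unset Strict Implicit. Unset Printing Implicit Defensive.
Import GRing.Theory Num.Theory.
Local Open Scope ring_scope.

Section T.
Variable Z : zmodType.
Lemma tri (G : nat -> nat -> Z) n :
  \sum_(i < n.+1) \sum_(j < i.+1) G j (i - j)%N =
  \sum_(j < n.+1) \sum_(k < (n - j).+1) G j k.
Proof.
elim: n => [|n IH]; first by rewrite !big_ord1.
rewrite big_ord_recr IH [RHS]big_ord_recr /= subnn big_ord1.
rewrite [in RHS](eq_bigr (fun j : 'I_n.+1 =>
   \sum_(k < (n - j).+1) G j k + G j (n.+1 - j)%N)); last first.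
  move=> j _; have hj : (j <= n)%N := ltn_ord j.
  by rewrite (subSn hj) big_ord_recr.
rewrite big_split /= -addrA; congr (_ + _).
by rewrite big_ord_recr /= subnn.
Qed.

Lemma sum_ifeq N t (X : nat -> Z) :
  \sum_(k <- iota 0 N) (if k == t then X k else 0) = if (t < N)%N then X t else 0.
Proof.
elim: N => [|N IH]; first by rewrite big_nil.
rewrite -addn1 iotaD big_cat /= IH big_seq1 add0n.
case: (ltngtP t N) => h.
- have h1 : (t < N + 1)%N by lia.
  by rewrite h1 ?(gtn_eqF h) ?addr0.
- have h1 : (t < N + 1)%N = false by lia.
  by rewrite h1 ?(ltn_eqF h) ?addr0.
- have h1 : (t < N + 1)%N by lia.
  by rewrite h1 h add0r.
Qed.
Lemma sum_iflt N t (X : nat -> Z) : (t < N)%N ->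
  \sum_(j <- iota 0 N) (if (j <= t)%N then X j else 0) = \sum_(j <- iota 0 t.+1) X j.
Proof.
move=> ht; rewrite -(subnKC ht) iotaD big_cat /= add0n.
rewrite [X in _ + X]big1_seq ?addr0; last first.
  move=> j /andP [_ hj]; move: hj; rewrite mem_iota => /andP [h1 h2].
  by have -> : (j <= t)%N = false by lia.
rewrite big_seq_cond [RHS]big_seq_cond; apply: eq_bigr => j /andP [hj _].
move: hj; rewrite -[0%N :: iota 1 t]/(iota 0 t.+1) mem_iota => /andP [h1 h2].
by have -> : (j <= t)%N by lia.
Qed.
Lemma sum_ifc (c : bool) I (r : seq I) (X : I -> Z) :
  \sum_(i <- r) (if c then X i else 0) = if c then \sum_(i <- r) X i else 0.
Proof. by case: c => //; rewrite big1. Qed.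

Lemma sum_iota_ord k (G : nat -> Z) : \sum_(i <- iota 0 k) G i = \sum_(i < k) G i.
Proof. by rewrite -(big_mkord xpredT) /index_iota subn0. Qed.

Lemma trisum (H : nat -> nat -> nat -> Z) n :
  \sum_(i <- iota 0 n.+1) \sum_(j <- iota 0 n.+1) \sum_(k <- iota 0 n.+1)
     (if (i + j + k).+1 == n then H i j k else 0) =
  if n is m.+1 then \sum_(l < m.+1) \sum_(a < l.+1) H a (l - a)%N (m - l)%N else 0.
Proof.
case: n => [|m].
  by rewrite big1 // => i _; rewrite big1 // => j _; rewrite big1.
rewrite [RHS](_ : _ = \sum_(a < m.+1) \sum_(b < (m - a).+1) H a b (m - a - b)%N); last first.
  transitivity (\sum_(i < m.+1) \sum_(j < i.+1) (fun a b => H a b (m - a - b)%N) j (i - j)%N).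
    apply: eq_bigr => l _; apply: eq_bigr => a _ /=.
    have hl : (l <= m)%N := ltn_ord l. have ha : (a <= l)%N := ltn_ord a.
    by rewrite -subnDA subnKC.
  exact: (tri (fun a b => H a b (m - a - b)%N) m).
transitivity (\sum_(i <- iota 0 m.+2) \sum_(j <- iota 0 m.+2)
   (if (i + j <= m)%N then H i j (m - (i + j))%N else 0)).
  apply: eq_bigr => i _; apply: eq_bigr => j _.
  rewrite (eq_bigr (fun k => if (i + j <= m)%N then (if k == (m - (i + j))%N then H i j k else 0) else 0)); last first.
    move=> k _; rewrite eqSS; case: leqP => h.
      have -> : ((i + j + k)%N == m) = (k == m - (i + j))%N by apply/idP/idP => /eqP e; apply/eqP; lia.
      done.
    by have -> : (i + j + k == m) = false by apply/negbTE/eqP; lia.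
  rewrite sum_ifc sum_ifeq; case: leqP => // h; rewrite ifT //; lia.
transitivity (\sum_(i <- iota 0 m.+2) (if (i <= m)%N then \sum_(j <- iota 0 (m - i).+1) H i j (m - i - j)%N else 0)).
  apply: eq_bigr => i _; case: leqP => hi.
    rewrite -(@sum_iflt m.+2 (m - i)); last by lia.
    apply: eq_bigr => j _; have -> : (i + j <= m)%N = (j <= m - i)%N by lia.
    by rewrite subnDA.
  by rewrite big1 // => j _; have -> : (i + j <= m)%N = false by lia.
rewrite sum_iflt // sum_iota_ord; apply: eq_bigr => i _.
by rewrite sum_iota_ord.
Qed.
End T.

Section S.
Variables (F : fieldType) (q : F).
Hypothesis hq0 : q != 0.

Definition A := word -> F.
HB.instance Definition _ := gen_eqMixin A.
HB.instance Definition _ := gen_choiceMixin A.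

Definition azero : A := fun _ => 0.
Definition aadd (X Y : A) : A := fun w => X w + Y w.
Definition aopp (X : A) : A := fun w => - X w.
Lemma aaddA : associative aadd.
Proof. by move=> X Y Z; apply: funext => w; rewrite /aadd addrA. Qed.
Lemma aaddC : commutative aadd.
Proof. by move=> X Y; apply: funext => w; rewrite /aadd addrC. Qed.
Lemma aadd0 : left_id azero aadd.
Proof. by move=> X; apply: funext => w; rewrite /aadd /azero add0r. Qed.
Lemma aaddN : left_inverse azero aopp aadd.
Proof. by move=> X; apply: funext => w; rewrite /aadd /aopp /azero addNr. Qed.
HB.instance Definition _ := GRing.isZmodule.Build A aaddA aaddC aadd0 aaddN.

Lemma addAE (X Y : A) w : (X + Y) w = X w + Y w. Proof. by []. Qed.
Lemma oppAE (X : A) w : (- X) w = - X w. Proof. by []. Qed.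
Lemma zeroAE w : (0 : A) w = 0. Proof. by []. Qed.
Lemma sumAE I (r : seq I) (P : pred I) (G : I -> A) w :
  (\sum_(i <- r | P i) G i) w = \sum_(i <- r | P i) G i w.
Proof. by apply: (big_morph (fun X : A => X w)). Qed.

Definition scl (c : F) (X : A) : A := fun w => c * X w.

Definition wt (s : word) (b : bool) : int := \sum_(c <- s) pair_form c b.
Definition dA (a : bool) (X : A) : A := fun w => X (a :: w).
Definition KA (a : bool) (X : A) : A := fun w => q ^ (wt w a) * X w.

Fixpoint mulw (w : word) : A -> A -> F := fun X Y =>
  match w with
  | [::] => X [::] * Y [::]
  | a :: w' => mulw w' (dA a X) Y + mulw w' (KA a X) (dA a Y)
  end.

Lemma dAD a X Y : dA a (X + Y) = dA a X + dA a Y. Proof. by []. Qed.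
Lemma KAD a X Y : KA a (X + Y) = KA a X + KA a Y.
Proof. by apply: funext => w; rewrite /KA !addAE mulrDr. Qed.
Lemma dAZ a c X : dA a (scl c X) = scl c (dA a X). Proof. by []. Qed.
Lemma KAZ a c X : KA a (scl c X) = scl c (KA a X).
Proof. by apply: funext => w; rewrite /KA /scl mulrCA. Qed.

Lemma mulwDl w X X' Y : mulw w (X + X') Y = mulw w X Y + mulw w X' Y.
Proof.
elim: w X X' Y => [|a w IH] X X' Y /=; first by rewrite addAE mulrDl.
by rewrite dAD KAD !IH addrACA.
Qed.
Lemma mulwDr w X Y Y' : mulw w X (Y + Y') = mulw w X Y + mulw w X Y'.
Proof.
elim: w X Y Y' => [|a w IH] X Y Y' /=; first by rewrite addAE mulrDr.
by rewrite dAD !IH addrACA.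
Qed.
Lemma mulwZl w c X Y : mulw w (scl c X) Y = c * mulw w X Y.
Proof.
elim: w X Y => [|a w IH] X Y /=; first by rewrite /scl mulrA.
by rewrite dAZ KAZ !IH mulrDr.
Qed.
Lemma mulwZr w c X Y : mulw w X (scl c Y) = c * mulw w X Y.
Proof.
elim: w X Y => [|a w IH] X Y /=; first by rewrite /scl mulrCA.
by rewrite dAZ !IH mulrDr.
Qed.
Lemma mulw0l w Y : mulw w 0 Y = 0.
Proof.
have H := mulwDl w 0 0 Y; rewrite addr0 in H.
by apply: (addrI (mulw w 0 Y)); rewrite -H addr0.
Qed.
Lemma mulw0r w X : mulw w X 0 = 0.
Proof.
have H := mulwDr w X 0 0; rewrite addr0 in H.
by apply: (addrI (mulw w X 0)); rewrite -H addr0.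
Qed.

Lemma wt_cons c s b : wt (c :: s) b = pair_form c b + wt s b.
Proof. by rewrite /wt big_cons. Qed.

Lemma dAK b a X : dA b (KA a X) = scl (q ^ pair_form b a) (KA a (dA b X)).
Proof.
apply: funext => w; rewrite /dA /KA /scl wt_cons expfzDr ?mulrA //.
Qed.
Lemma KAK a b X : KA a (KA b X) = KA b (KA a X).
Proof. by apply: funext => w; rewrite /KA mulrCA. Qed.

Lemma mulwK w a X Y : mulw w (KA a X) (KA a Y) = q ^ (wt w a) * mulw w X Y.
Proof.
elim: w X Y => [|b w IH] X Y /=; first by rewrite /KA /wt big_nil expr0z !mul1r.
rewrite dAK KAK dAK mulwZl mulwZr !IH wt_cons expfzDr // -mulrDr.
by rewrite -mulrDr mulrA.
Qed.

Definition aone : A := fun w => if w is [::] then 1 else 0.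
Definition amul (X Y : A) : A := fun w => mulw w X Y.

Lemma dA_one a : dA a aone = 0. Proof. by []. Qed.
Lemma KA_one a : KA a aone = aone.
Proof.
apply: funext => -[|c w]; rewrite /KA /=; last by rewrite mulr0.
by rewrite /wt big_nil expr0z mulr1.
Qed.

Lemma mulw1l w Y : mulw w aone Y = Y w.
Proof.
elim: w Y => [|a w IH] Y /=; first by rewrite mul1r.
by rewrite dA_one mulw0l KA_one IH add0r.
Qed.
Lemma mulw1r w X : mulw w X aone = X w.
Proof.
elim: w X => [|a w IH] X /=; first by rewrite mulr1.
by rewrite dA_one mulw0r IH addr0.
Qed.

Lemma dA_mul a X Y : dA a (amul X Y) = amul (dA a X) Y + amul (KA a X) (dA a Y).
Proof. by []. Qed.
Lemma KA_mul a X Y : KA a (amul X Y) = amul (KA a X) (KA a Y).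
Proof. by apply: funext => w; rewrite /KA /amul mulwK. Qed.

Lemma amulA : associative amul.
Proof.
move=> X Y Z; apply: funext => w; rewrite /amul.
elim: w X Y Z => [|a w IH] X Y Z /=; first by rewrite mulrA.
rewrite -/(amul X Y) -/(amul Y Z) dA_mul KA_mul dA_mul !mulwDl mulwDr.
rewrite -!/(amul _ _) !IH.
by rewrite /amul -addrA.
Qed.
Lemma amul1l : left_id aone amul.
Proof. by move=> X; apply: funext => w; rewrite /amul mulw1l. Qed.
Lemma amul1r : right_id aone amul.
Proof. by move=> X; apply: funext => w; rewrite /amul mulw1r. Qed.
Lemma amulDl : left_distributive amul +%R.
Proof. by move=> X Y Z; apply: funext => w; rewrite /amul mulwDl. Qed.
Lemma amulDr : right_distributive amul +%R.
Proof. by move=> X Y Z; apply: funext => w; rewrite /amul mulwDr. Qed.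
HB.instance Definition _ := GRing.Zmodule_isPzRing.Build A amulA amul1l amul1r amulDl amulDr.
Lemma aone_neq0 : (1 : A) != 0.
Proof. by apply/eqP => /(congr1 (fun X : A => X [::])) /eqP; rewrite oner_eq0. Qed.
HB.instance Definition _ := GRing.PzSemiRing_isNonZero.Build A aone_neq0.

Lemma sclA a b X : scl a (scl b X) = scl (a * b) X.
Proof. by apply: funext => w; rewrite /scl mulrA. Qed.
Lemma scl1 : left_id 1 scl.
Proof. by move=> X; apply: funext => w; rewrite /scl mul1r. Qed.
Lemma sclDr : right_distributive scl +%R.
Proof. by move=> c X Y; apply: funext => w; rewrite /scl addAE mulrDr. Qed.
Lemma sclDl X : {morph scl^~ X : a b / a + b}.
Proof. by move=> a b; apply: funext => w; rewrite /scl addAE mulrDl. Qed.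
HB.instance Definition _ := GRing.Zmodule_isLmodule.Build F A sclA scl1 sclDr sclDl.
Lemma sclAl (a : F) (u v : A) : a *: (u * v) = (a *: u) * v.
Proof. by apply: funext => w; rewrite /GRing.scale /= /scl /GRing.mul /= /amul mulwZl. Qed.
HB.instance Definition _ := GRing.Lmodule_isLalgebra.Build F A sclAl.
Lemma sclAr (a : F) (u v : A) : a *: (u * v) = u * (a *: v).
Proof. by apply: funext => w; rewrite /GRing.scale /= /scl /GRing.mul /= /amul mulwZr. Qed.
HB.instance Definition _ := GRing.Lalgebra_isAlgebra.Build F A sclAr.

Lemma mulAE (X Y : A) w : (X * Y) w = mulw w X Y. Proof. by []. Qed.
Lemma scaleAE c (X : A) w : (c *: X) w = c * X w. Proof. by []. Qed.
Lemma oneAE w : (1 : A) w = if w is [::] then 1 else 0. Proof. by []. Qed.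

Lemma dA_mulr a (X Y : A) : dA a (X * Y) = dA a X * Y + KA a X * dA a Y.
Proof. by []. Qed.
Lemma dA_add a (X Y : A) : dA a (X + Y) = dA a X + dA a Y. Proof. by []. Qed.
Lemma dA_opp a (X : A) : dA a (- X) = - dA a X. Proof. by []. Qed.
Lemma dA_0 a : dA a 0 = 0. Proof. by []. Qed.
Lemma dA_1 a : dA a 1 = 0. Proof. by []. Qed.
Lemma dA_scale a c (X : A) : dA a (c *: X) = c *: dA a X. Proof. by []. Qed.
Lemma dA_sum a I (r : seq I) (P : pred I) (G : I -> A) :
  dA a (\sum_(i <- r | P i) G i) = \sum_(i <- r | P i) dA a (G i).
Proof. by apply: (big_morph (dA a)); [apply: dA_add|apply: dA_0]. Qed.

Lemma eqA (X Y : A) : X [::] = Y [::] -> dA false X = dA false Y -> dA true X = dA true Y -> X = Y.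
Proof.
move=> h0 hf ht; apply: funext => -[|[] w] //.
  by have := congr1 (fun Z : A => Z w) ht.
by have := congr1 (fun Z : A => Z w) hf.
Qed.

Definition delta (s : word) : A := fun w => (w == s)%:R.
Lemma delta_nil : delta [::] = 1.
Proof. by apply: funext => -[|c w]. Qed.
Lemma KA_delta a s : KA a (delta s) = q ^ (wt s a) *: delta s.
Proof.
apply: funext => w; rewrite /KA /delta scaleAE.
by case: eqP => [->|_]; rewrite ?mulr0 ?mulr1.
Qed.
Lemma dA_delta_nil a : dA a (delta [::]) = 0. Proof. by []. Qed.
Lemma dA_delta_cons a b s : dA a (delta (b :: s)) = if b == a then delta s else 0.
Proof.
apply: funext => w; rewrite /dA /delta; case: (b =P a) => [->|/eqP ne].
  by rewrite eqseq_cons eqxx.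
by rewrite eqseq_cons [a == b]eq_sym (negbTE ne).
Qed.

Definition emb (v : V F) : A := fun w => coef v w.

Lemma coef_cat (u v : V F) w : coef (u ++ v) w = coef u w + coef v w.
Proof. by rewrite /coef big_cat. Qed.
Lemma coef_seq1 (c : F) s w : coef [:: (c, s)] w = if s == w then c else 0.
Proof. by rewrite /coef big_seq1. Qed.
Lemma coef_map_cons a (X : V F) w :
  coef [seq (p.1, a :: p.2) | p <- X] w =
  if w is b :: w' then (if b == a then coef X w' else 0) else 0.
Proof.
rewrite /coef big_map; case: w => [|b w].
  by rewrite big1.
case: eqP => [->|/eqP ne]; first by apply: eq_bigr => p _; rewrite eqseq_cons eqxx.
by rewrite big1 // => p _; rewrite eqseq_cons eq_sym (negbTE ne).
Qed.
Lemma coef_map_cons_k a k (X : V F) w :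
  coef [seq (p.1 * k, a :: p.2) | p <- X] w =
  if w is b :: w' then (if b == a then coef X w' * k else 0) else 0.
Proof.
rewrite /coef big_map; case: w => [|b w].
  by rewrite big1.
case: eqP => [->|/eqP ne].
  rewrite mulr_suml; apply: eq_bigr => p _; rewrite eqseq_cons eqxx /=.
  by case: ifP; rewrite ?mul0r.
by rewrite big1 // => p _; rewrite eqseq_cons eq_sym (negbTE ne).
Qed.

Lemma shw_nil_l t : shw q [::] t = [:: (1, t)]. Proof. by []. Qed.
Lemma shw_nil_r s : shw q s [::] = [:: (1, s)]. Proof. by case: s. Qed.
Lemma shw_cons a s b t : shw q (a :: s) (b :: t) =
  [seq (p.1, a :: p.2) | p <- shw q s (b :: t)] ++
  [seq (p.1 * q ^ (wt (a :: s) b), b :: p.2) | p <- shw q (a :: s) t].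
Proof. by []. Qed.

Lemma coef_shw w s t : coef (shw q s t) w = mulw w (delta s) (delta t).
Proof.
elim: w s t => [|a w IH] s t.
  case: s => [|c s]; case: t => [|d t];
    rewrite ?shw_cons ?shw_nil_l ?shw_nil_r ?coef_seq1 ?coef_cat ?coef_map_cons ?coef_map_cons_k /= /delta /=.
  - by rewrite mul1r.
  - by rewrite mulr0.
  - by rewrite mul0r.
  - by rewrite addr0 mul0r.
rewrite /=; case: s => [|c s].
  rewrite shw_nil_l coef_seq1 dA_delta_nil mulw0l add0r KA_delta mulwZl.
  rewrite /wt big_nil expr0z mul1r delta_nil mulw1l /dA /delta.
  - by rewrite eq_sym; case: eqP.
case: t => [|d t].
  rewrite shw_nil_r coef_seq1 dA_delta_nil mulw0r addr0 dA_delta_cons.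
  rewrite eqseq_cons; case: (c =P a) => [_|_] /=.
    by rewrite delta_nil mulw1r /delta eq_sym; case: eqP.
  by rewrite mulw0l.
rewrite shw_cons coef_cat coef_map_cons coef_map_cons_k !IH.
rewrite !dA_delta_cons KA_delta.
case: (c =P a) => [->|/eqP Hc]; case: (d =P a) => [->|/eqP Hd];
  rewrite ?eqxx ?[a == c]eq_sym ?[a == d]eq_sym ?(negbTE Hc) ?(negbTE Hd)
    ?mulw0l ?mulw0r ?add0r ?addr0 ?mulwZl // mulrC //.
Qed.

Lemma embE (u : V F) : emb u = \sum_(p <- u) p.1 *: delta p.2.
Proof.
apply: funext => w; rewrite /emb /coef sumAE; apply: eq_bigr => p _.
by rewrite scaleAE /delta eq_sym; case: eqP; rewrite ?mulr1 ?mulr0.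
Qed.
Lemma emb_word s : emb (vword F s) = delta s.
Proof. by rewrite embE /vword big_seq1 scale1r. Qed.
Lemma emb_add (u v : V F) : emb (vadd u v) = emb u + emb v.
Proof. by rewrite !embE /vadd big_cat. Qed.
Lemma emb_scale c (u : V F) : emb (vscale c u) = c *: emb u.
Proof.
rewrite !embE /vscale big_map scaler_sumr; apply: eq_bigr => p _.
by rewrite scalerA.
Qed.
Lemma emb_sum I (s : seq I) (f : I -> V F) : emb (vsum s f) = \sum_(i <- s) emb (f i).
Proof.
elim: s => [|i s IH]; first by rewrite /vsum /= embE !big_nil.
by rewrite /vsum /= -/(vsum s f) big_cons -IH -emb_add.
Qed.
Lemma coef_mapk (k : F) (X : V F) w :
  coef [seq (k * p.1, p.2) | p <- X] w = k * coef X w.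
Proof.
rewrite /coef big_map mulr_sumr; apply: eq_bigr => p _.
by case: ifP; rewrite ?mulr0.
Qed.
Lemma emb_star (u v : V F) : emb (star q u v) = emb u * emb v.
Proof.
apply: funext => w; rewrite {1}/emb /star /coef big_flatten /=.
rewrite big_allpairs_dep.
rewrite (embE u) (embE v) mulr_suml sumAE; apply: eq_bigr => a _.
rewrite mulr_sumr sumAE; apply: eq_bigr => b _.
rewrite -scalerAl -scalerAr scalerA scaleAE mulAE -coef_shw -coef_mapk.
by rewrite /coef.
Qed.
Lemma veqP (u v : V F) : emb u = emb v -> veq u v.
Proof. by move=> h w; have := congr1 (fun X : A => X w) h. Qed.

Lemma altS b n : alt b n.+1 = b :: alt (~~ b) n.
Proof.
rewrite /alt /mkseq -add1n iotaD /=; congr (_ :: _); first by rewrite addbF.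
rewrite (iotaDl 1 0) -map_comp; apply: eq_map => i /=.
by case: b; case: (odd i).
Qed.
Lemma alt0 b : alt b 0 = [::]. Proof. by []. Qed.

Lemma pf_sum b a : pair_form b a + pair_form (~~ b) a = 0.
Proof. by case: a; case: b. Qed.
Lemma wt_alt_even b i a : wt (alt b (2 * i)) a = 0.
Proof.
elim: i b => [|i IH] b; first by rewrite /wt big_nil.
by rewrite mulnS !altS !wt_cons negbK IH addr0 pf_sum.
Qed.
Lemma wt_alt_odd b i a : wt (alt b (2 * i).+1) a = pair_form b a.
Proof. by rewrite altS wt_cons wt_alt_even addr0. Qed.

Definition Bs i := delta (alt lx (2 * i)).
Definition As i := delta (alt ly (2 * i)).
Definition Cs i := delta (alt lx (2 * i).+1).
Definition Es i := delta (alt ly (2 * i).+1).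

Lemma Bs0 : Bs 0 = 1. Proof. by rewrite /Bs muln0 alt0 delta_nil. Qed.
Lemma As0 : As 0 = 1. Proof. by rewrite /As muln0 alt0 delta_nil. Qed.

Lemma dxB i : dA false (Bs i) = if i is j.+1 then Es j else 0.
Proof.
case: i => [|i]; rewrite /Bs ?muln0 ?alt0 ?dA_delta_nil //.
all: by rewrite mulnS altS dA_delta_cons eqxx.
Qed.
Lemma dyB i : dA true (Bs i) = 0.
Proof.
case: i => [|i]; rewrite /Bs ?muln0 ?alt0 ?dA_delta_nil //.
all: by rewrite mulnS altS dA_delta_cons.
Qed.
Lemma dyA i : dA true (As i) = if i is j.+1 then Cs j else 0.
Proof.
case: i => [|i]; rewrite /As ?muln0 ?alt0 ?dA_delta_nil //.
all: by rewrite mulnS altS dA_delta_cons eqxx.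
Qed.
Lemma dxA i : dA false (As i) = 0.
Proof.
case: i => [|i]; rewrite /As ?muln0 ?alt0 ?dA_delta_nil //.
all: by rewrite mulnS altS dA_delta_cons.
Qed.
Lemma dxC i : dA false (Cs i) = As i.
Proof. by rewrite /Cs altS dA_delta_cons eqxx. Qed.
Lemma dyC i : dA true (Cs i) = 0.
Proof. by rewrite /Cs altS dA_delta_cons. Qed.
Lemma dyE i : dA true (Es i) = Bs i.
Proof. by rewrite /Es altS dA_delta_cons eqxx. Qed.
Lemma dxE i : dA false (Es i) = 0.
Proof. by rewrite /Es altS dA_delta_cons. Qed.

Lemma KB a i : KA a (Bs i) = Bs i.
Proof. by rewrite /Bs KA_delta wt_alt_even expr0z scale1r. Qed.
Lemma KAs a i : KA a (As i) = As i.
Proof. by rewrite /As KA_delta wt_alt_even expr0z scale1r. Qed.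
Lemma KxC i : KA false (Cs i) = q ^+ 2 *: Cs i.
Proof. by rewrite /Cs KA_delta wt_alt_odd. Qed.
Lemma KyC i : KA true (Cs i) = q ^- 2 *: Cs i.
Proof. by rewrite /Cs KA_delta wt_alt_odd /pair_form /= exprnN. Qed.
Lemma KyE i : KA true (Es i) = q ^+ 2 *: Es i.
Proof. by rewrite /Es KA_delta wt_alt_odd. Qed.
Lemma KxE i : KA false (Es i) = q ^- 2 *: Es i.
Proof. by rewrite /Es KA_delta wt_alt_odd /pair_form /= exprnN. Qed.

Lemma cB i : Bs i [::] = (i == 0)%:R.
Proof. by case: i => [|i]; rewrite /Bs /delta ?muln0 // mulnS altS. Qed.
Lemma cAs i : As i [::] = (i == 0)%:R.
Proof. by case: i => [|i]; rewrite /As /delta ?muln0 // mulnS altS. Qed.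
Lemma cC i : Cs i [::] = 0.
Proof. by rewrite /Cs /delta altS. Qed.
Lemma cE i : Es i [::] = 0.
Proof. by rewrite /Es /delta altS. Qed.
Lemma cmul (X Y : A) : (X * Y) [::] = X [::] * Y [::]. Proof. by []. Qed.

Definition conv (f g : nat -> A) n := \sum_(i < n.+1) f i * g (n - i)%N.
Definition sh (f : nat -> A) n : A := if n is m.+1 then f m else 0.
Definition sc (c : F) (f : nat -> A) n : A := c ^+ n *: f n.
Definition del (n : nat) : A := (n == 0)%N%:R.

Lemma conv_shl f g n : conv (sh f) g n = sh (conv f g) n.
Proof.
rewrite /conv big_ord_recl /= mul0r add0r; case: n => [|n]; first by rewrite big_ord0.
by apply: eq_bigr => i _ /=; rewrite subSS.
Qed.
Lemma conv_shr f g n : conv f (sh g) n = sh (conv f g) n.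
Proof.
rewrite /conv big_ord_recr /= subnn mulr0 addr0; case: n => [|n]; first by rewrite big_ord0.
by apply: eq_bigr => i _ /=; rewrite subSn // -ltnS.
Qed.
Lemma conv_scl c f g n : conv (fun i => c *: f i) g n = c *: conv f g n.
Proof. by rewrite /conv scaler_sumr; apply: eq_bigr => i _; rewrite scalerAl. Qed.
Lemma conv_scr c f g n : conv f (fun i => c *: g i) n = c *: conv f g n.
Proof. by rewrite /conv scaler_sumr; apply: eq_bigr => i _; rewrite scalerAr. Qed.
Lemma conv0l g n : conv (fun _ => 0) g n = 0.
Proof. by rewrite /conv big1 // => i _; rewrite mul0r. Qed.
Lemma conv0r f n : conv f (fun _ => 0) n = 0.
Proof. by rewrite /conv big1 // => i _; rewrite mulr0. Qed.
Lemma conv_sc c f g n : conv (sc c f) (sc c g) n = sc c (conv f g) n.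
Proof.
rewrite /conv /sc scaler_sumr; apply: eq_bigr => i _.
by rewrite -scalerAl -scalerAr scalerA -exprD subnKC // -ltnS.
Qed.
Lemma conv_dell g n : conv del g n = g n.
Proof.
rewrite /conv big_ord_recl /= mul1r subn0 big1 ?addr0 // => i _.
by rewrite /del /= mul0r.
Qed.
Lemma conv_delr f n : conv f del n = f n.
Proof.
rewrite /conv big_ord_recr /= subnn mulr1 big1 ?add0r // => i _.
by rewrite /del subn_eq0 leqNgt ltn_ord mulr0.
Qed.
Lemma dA_conv a f g n : dA a (conv f g n) =
  conv (fun i => dA a (f i)) g n + conv (fun i => KA a (f i)) (fun i => dA a (g i)) n.
Proof. by rewrite /conv dA_sum -big_split; apply: eq_bigr => i _; rewrite dA_mulr. Qed.
Lemma c_conv f g n : (conv f g n) [::] = \sum_(i < n.+1) f i [::] * g (n - i)%N [::].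
Proof. by rewrite /conv sumAE. Qed.
Lemma dA_sc a c f n : dA a (sc c f n) = sc c (fun i => dA a (f i)) n.
Proof. by []. Qed.
Lemma KA_sc a c f n : KA a (sc c f n) = sc c (fun i => KA a (f i)) n.
Proof. by apply: funext => w; rewrite /KA /sc !scaleAE mulrCA. Qed.
Lemma sc_sh c f : (fun i => sc c (sh f) i) = (fun i => c *: sh (sc c f) i).
Proof.
apply: funext => -[|i]; rewrite /sc /sh ?scaler0 //.
by rewrite exprS scalerA.
Qed.
Lemma conv_ext f f' g g' n : f =1 f' -> g =1 g' -> conv f g n = conv f' g' n.
Proof. by move=> hf hg; rewrite /conv; apply: eq_bigr => i _; rewrite hf hg. Qed.

Lemma natAE k w : (k%:R : A) w = k%:R * (1 : A) w.
Proof. by elim: k => [|k IH]; rewrite ?mul0r // !mulrS addAE IH mulrDl mul1r. Qed.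
Lemma dA_natr a k : dA a (k%:R : A) = 0.
Proof. by apply: funext => w; rewrite /dA natAE oneAE mulr0. Qed.
Lemma dA_del a n : dA a (del n) = 0. Proof. exact: dA_natr. Qed.
Lemma c_del n : del n [::] = (n == 0)%N%:R.
Proof. by rewrite /del natAE oneAE mulr1. Qed.
Lemma dA_sh a h n : dA a (sh h n) = sh (fun m => dA a (h m)) n.
Proof. by case: n. Qed.
Lemma c_sh h n : sh h n [::] = if n is m.+1 then h m [::] else 0.
Proof. by case: n. Qed.
Lemma sh_scale c h n : sh (fun m => c *: h m) n = c *: sh h n.
Proof. by case: n => [|n] //=; rewrite scaler0. Qed.
Lemma sh_add h h' n : sh (fun m => h m + h' m) n = sh h n + sh h' n.
Proof. by case: n => [|n] //=; rewrite addr0. Qed.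

Lemma fdxB c : (fun i => dA false (sc c Bs i)) = (fun i => c *: sh (sc c Es) i).
Proof. rewrite -sc_sh; apply: funext => i; by rewrite dA_sc /sc dxB; case: i. Qed.
Lemma fdyB c : (fun i => dA true (sc c Bs i)) = (fun _ => 0).
Proof. by apply: funext => i; rewrite dA_sc /sc dyB scaler0. Qed.
Lemma fdyA c : (fun i => dA true (sc c As i)) = (fun i => c *: sh (sc c Cs) i).
Proof. rewrite -sc_sh; apply: funext => i; by rewrite dA_sc /sc dyA; case: i. Qed.
Lemma fdxA c : (fun i => dA false (sc c As i)) = (fun _ => 0).
Proof. by apply: funext => i; rewrite dA_sc /sc dxA scaler0. Qed.
Lemma fdxC c : (fun i => dA false (sc c Cs i)) = sc c As.
Proof. by apply: funext => i; rewrite dA_sc /sc dxC. Qed.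
Lemma fdyC c : (fun i => dA true (sc c Cs i)) = (fun _ => 0).
Proof. by apply: funext => i; rewrite dA_sc /sc dyC scaler0. Qed.
Lemma fdyE c : (fun i => dA true (sc c Es i)) = sc c Bs.
Proof. by apply: funext => i; rewrite dA_sc /sc dyE. Qed.
Lemma fdxE c : (fun i => dA false (sc c Es i)) = (fun _ => 0).
Proof. by apply: funext => i; rewrite dA_sc /sc dxE scaler0. Qed.
Lemma gdxB : (fun i => dA false (Bs i)) = sh Es.
Proof. by apply: funext => i; rewrite dxB; case: i. Qed.
Lemma gdyB : (fun i => dA true (Bs i)) = (fun _ => 0).
Proof. by apply: funext => i; rewrite dyB. Qed.
Lemma gdyA : (fun i => dA true (As i)) = sh Cs.
Proof. by apply: funext => i; rewrite dyA; case: i. Qed.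
Lemma gdxA : (fun i => dA false (As i)) = (fun _ => 0).
Proof. by apply: funext => i; rewrite dxA. Qed.
Lemma gdxC : (fun i => dA false (Cs i)) = As.
Proof. by apply: funext => i; rewrite dxC. Qed.
Lemma gdyC : (fun i => dA true (Cs i)) = (fun _ => 0).
Proof. by apply: funext => i; rewrite dyC. Qed.
Lemma gdyE : (fun i => dA true (Es i)) = Bs.
Proof. by apply: funext => i; rewrite dyE. Qed.
Lemma gdxE : (fun i => dA false (Es i)) = (fun _ => 0).
Proof. by apply: funext => i; rewrite dxE. Qed.

Lemma fKB a c : (fun i => KA a (sc c Bs i)) = sc c Bs.
Proof. by apply: funext => i; rewrite KA_sc; congr sc; apply: funext => j; rewrite KB. Qed.
Lemma fKA a c : (fun i => KA a (sc c As i)) = sc c As.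
Proof. by apply: funext => i; rewrite KA_sc; congr sc; apply: funext => j; rewrite KAs. Qed.
Lemma fKxC c : (fun i => KA false (sc c Cs i)) = (fun i => q ^+ 2 *: sc c Cs i).
Proof. by apply: funext => i; rewrite KA_sc /sc KxC !scalerA mulrC. Qed.
Lemma fKyC c : (fun i => KA true (sc c Cs i)) = (fun i => q ^- 2 *: sc c Cs i).
Proof. by apply: funext => i; rewrite KA_sc /sc KyC !scalerA mulrC. Qed.
Lemma fKxE c : (fun i => KA false (sc c Es i)) = (fun i => q ^- 2 *: sc c Es i).
Proof. by apply: funext => i; rewrite KA_sc /sc KxE !scalerA mulrC. Qed.
Lemma fKyE c : (fun i => KA true (sc c Es i)) = (fun i => q ^+ 2 *: sc c Es i).
Proof. by apply: funext => i; rewrite KA_sc /sc KyE !scalerA mulrC. Qed.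

Ltac dexp := rewrite ?dA_add ?dA_scale ?dA_del ?dA_natr ?dA_conv ?fdxB ?fdyB ?fdyA ?fdxA ?fdxC ?fdyC ?fdyE ?fdxE ?gdxB ?gdyB ?gdyA ?gdxA ?gdxC ?gdyC ?gdyE ?gdxE ?fKB ?fKA ?fKxC ?fKyC ?fKxE ?fKyE ?conv0l ?conv0r ?conv_scl ?conv_scr ?conv_shl ?conv_shr ?addr0 ?add0r /=.

Lemma c_convC f n : (conv f Cs n) [::] = 0.
Proof. by rewrite c_conv big1 // => i _; rewrite cC mulr0. Qed.
Lemma c_convE f n : (conv f Es n) [::] = 0.
Proof. by rewrite c_conv big1 // => i _; rewrite cE mulr0. Qed.
Lemma c_convBA c n : (conv (sc c Bs) As n) [::] = (n == 0)%N%:R.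
Proof.
rewrite c_conv big_ord_recl /= big1 => [|i _]; last first.
  by rewrite /sc scaleAE cB mulr0 mul0r.
by rewrite addr0 /sc scaleAE cB cAs expr0 !mul1r subn0.
Qed.
Lemma c_convAB c n : (conv (sc c As) Bs n) [::] = (n == 0)%N%:R.
Proof.
rewrite c_conv big_ord_recl /= big1 => [|i _]; last first.
  by rewrite /sc scaleAE cAs mulr0 mul0r.
by rewrite addr0 /sc scaleAE cB cAs expr0 !mul1r subn0.
Qed.

Lemma R2 n : conv (sc (q ^- 2) Bs) Es n = conv (sc (q ^- 2) Es) Bs n.
Proof.
apply: eqA; first by rewrite c_convE c_conv big1 // => i _; rewrite /sc scaleAE cE mulr0 mul0r.
  by dexp.
by dexp.
Qed.

Lemma R4 n : conv (sc (q ^- 2) Bs) As n = del n + sh (conv (sc (q ^- 2) Es) Cs) n.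
Proof.
case: n => [|n].
  by rewrite /conv big_ord1 /sc expr0 scale1r Bs0 As0 mulr1 /del /= addr0.
rewrite /del /= add0r.
apply: eqA; first by rewrite c_convBA c_convC.
  by dexp.
by dexp.
Qed.

Definition P1 n := conv (sc (q ^+ 2) Bs) Cs n = conv (sc (q ^+ 2) Cs) Bs n.
Definition PX n := conv (sc (q ^+ 2) Es) As n = conv (sc (q ^+ 2) As) Es n.
Definition P3 n := conv (sc (q ^+ 2) Bs) As n = del n + q ^+ 2 *: sh (conv (sc (q ^+ 2) Cs) Es) n.
Definition PY n := conv (sc (q ^+ 2) As) Bs n = del n + q ^+ 2 *: sh (conv (sc (q ^+ 2) Es) Cs) n.

Lemma P3_0 : P3 0.
Proof. by rewrite /P3 /conv big_ord1 /sc expr0 scale1r Bs0 As0 mulr1 /del /= scaler0 addr0. Qed.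
Lemma PY_0 : PY 0.
Proof. by rewrite /PY /conv big_ord1 /sc expr0 scale1r Bs0 As0 mulr1 /del /= scaler0 addr0. Qed.

Lemma P1_of n : P3 n -> PY n -> P1 n.
Proof.
rewrite /P1 /P3 /PY => h3 hy.
apply: eqA; first by rewrite !c_convC c_conv big1 // => i _; rewrite /sc scaleAE cC mulr0 mul0r.
  by dexp; rewrite h3 hy addrCA !addrA.
by dexp.
Qed.
Lemma PX_of n : P3 n -> PY n -> PX n.
Proof.
rewrite /PX /P3 /PY => h3 hy.
apply: eqA; first by rewrite !c_convE c_conv big1 // => i _; rewrite /sc scaleAE cE mulr0 mul0r.
  by dexp.
by dexp; rewrite h3 hy [RHS]addrCA addrA.
Qed.
Lemma P3_S n : P1 n -> PX n -> P3 n.+1.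
Proof.
rewrite /P1 /PX /P3 => h1 hx; rewrite /del /= add0r.
apply: eqA; first by rewrite c_convBA /sc scaleAE c_convE mulr0.
  by dexp; rewrite hx.
by dexp; rewrite scalerA mulfV ?expf_neq0 // scale1r h1.
Qed.
Lemma PY_S n : P1 n -> PX n -> PY n.+1.
Proof.
rewrite /P1 /PX /PY => h1 hx; rewrite /del /= add0r.
apply: eqA; first by rewrite c_convAB /sc scaleAE c_convC mulr0.
  by dexp; rewrite scalerA mulfV ?expf_neq0 // scale1r hx.
by dexp; rewrite h1.
Qed.

Lemma qsys n : [/\ P1 n, PX n, P3 n & PY n].
Proof.
elim: n => [|n [h1 hx _ _]].
  by split; [apply: P1_of|apply: PX_of|apply: P3_0|apply: PY_0];
    try apply: P3_0; try apply: PY_0.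
have h3 := P3_S h1 hx; have hy := PY_S h1 hx.
by split => //; [apply: P1_of|apply: PX_of].
Qed.


Lemma convA f g h n : conv (conv f g) h n = conv f (conv g h) n.
Proof.
rewrite /conv.
rewrite (eq_bigr (fun i : 'I_n.+1 => \sum_(j < i.+1) f j * g (i - j)%N * h (n - i)%N));
  last by move=> i _; rewrite mulr_suml.
rewrite [RHS](eq_bigr (fun j : 'I_n.+1 => \sum_(k < (n - j).+1) f j * g k * h (n - j - k)%N));
  last by move=> j _; rewrite mulr_sumr; apply: eq_bigr => k _; rewrite mulrA.
rewrite -(@tri _ (fun j k => f j * g k * h (n - j - k)%N)).
apply: eq_bigr => i _; apply: eq_bigr => j _.
have hi : (i <= n)%N := ltn_ord i. have hj : (j <= i)%N := ltn_ord j.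
by rewrite -subnDA subnKC.
Qed.

Lemma conv_addr f g g' n : conv f (fun i => g i + g' i) n = conv f g n + conv f g' n.
Proof. by rewrite /conv -big_split; apply: eq_bigr => i _; rewrite mulrDr. Qed.

Lemma conv_cancel P Q : (forall n, conv P Bs n = conv Q Bs n) -> forall n, P n = Q n.
Proof.
move=> h n; elim/ltn_ind: n => n IH.
have := h n; rewrite /conv !big_ord_recr /= subnn Bs0 !mulr1.
rewrite (eq_bigr (fun i : 'I_n => Q i * Bs (n - i)%N)); first by move/addrI.
by move=> i _; rewrite IH.
Qed.

Lemma size_Ds n : size (Ds q n) = n.+1.
Proof. by elim: n => [|n IH] //=; rewrite size_rcons IH. Qed.
Lemma nth_Ds n i : (i <= n)%N -> nth [::] (Ds q n) i = D q i.
Proof.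
elim: n => [|n IH] hi; first by rewrite leqn0 in hi; rewrite (eqP hi).
rewrite leq_eqVlt in hi; case/orP: hi => [/eqP -> //|hi].
by rewrite /= nth_rcons size_Ds hi IH.
Qed.
Lemma D_S n : D q n.+1 = vscale (-1) (vsum (iota 0 n.+1) (fun i => star q (D q i) (Gtw F (n.+1 - i)))).
Proof.
rewrite {1}/D; change (Ds q n.+1) with (rcons (Ds q n) (vscale (-1) (vsum (iota 0 n.+1)
  (fun i => star q (nth [::] (Ds q n) i) (Gtw F (n.+1 - i)))))).
rewrite nth_rcons size_Ds ltnn eqxx.
congr (vscale _ _); rewrite /vsum; congr flatten; apply/eq_in_map => i.
rewrite mem_iota add0n => /andP [_ hi].
by rewrite nth_Ds.
Qed.
Definition dd n := emb (D q n).
Lemma emb_Gtw k : emb (Gtw F k) = Bs k. Proof. by rewrite emb_word. Qed.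
Lemma dd0 : dd 0 = 1. Proof. by rewrite /dd /D /= emb_word delta_nil. Qed.
Lemma dd_S n : dd n.+1 = -1 *: \sum_(i < n.+1) dd i * Bs (n.+1 - i)%N.
Proof.
rewrite /dd D_S emb_scale emb_sum sum_iota_ord; congr (_ *: _).
by apply: eq_bigr => i _; rewrite emb_star emb_Gtw.
Qed.
Lemma conv_dB n : conv dd Bs n = del n.
Proof.
case: n => [|n]; first by rewrite /conv big_ord1 dd0 Bs0 mulr1.
by rewrite /conv big_ord_recr /= subnn Bs0 mulr1 dd_S scaleN1r subrr /del.
Qed.
Lemma conv_sdB c n : conv (sc c dd) (sc c Bs) n = del n.
Proof.
rewrite conv_sc /sc conv_dB; case: n => [|n]; first by rewrite expr0 scale1r.
by rewrite /del /= scaler0.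
Qed.

Lemma e1 m : conv (sc (q ^+ 2) dd) (sc (q ^+ 2) Cs) m = conv Cs dd m.
Proof.
move: m; apply: conv_cancel => m.
rewrite convA.
transitivity (conv (sc (q ^+ 2) dd) (conv (sc (q ^+ 2) Bs) Cs) m).
  by apply: conv_ext => // k; case: (qsys k) => h1 _ _ _; rewrite h1.
rewrite -convA.
transitivity (conv del Cs m).
  by apply: conv_ext => // k; apply: conv_sdB.
rewrite conv_dell; symmetry; rewrite convA.
transitivity (conv Cs del m); last exact: conv_delr.
by apply: conv_ext => // k; apply: conv_dB.
Qed.
Lemma e2 m : conv (sc (q ^- 2) dd) (sc (q ^- 2) Es) m = conv Es dd m.
Proof.
move: m; apply: conv_cancel => m.
rewrite convA.
transitivity (conv (sc (q ^- 2) dd) (conv (sc (q ^- 2) Bs) Es) m).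
  by apply: conv_ext => // k; rewrite R2.
rewrite -convA.
transitivity (conv del Es m).
  by apply: conv_ext => // k; apply: conv_sdB.
rewrite conv_dell; symmetry; rewrite convA.
transitivity (conv Es del m); last exact: conv_delr.
by apply: conv_ext => // k; apply: conv_dB.
Qed.

Lemma claim1 n : As n = sc (q ^+ 2) dd n + q ^+ 2 *: sh (conv (conv Cs dd) Es) n.
Proof.
transitivity (conv del As n); first by rewrite conv_dell.
transitivity (conv (conv (sc (q ^+ 2) dd) (sc (q ^+ 2) Bs)) As n).
  by apply: conv_ext => // k; rewrite conv_sdB.
rewrite convA.
transitivity (conv (sc (q ^+ 2) dd) (fun k => del k + q ^+ 2 *: sh (conv (sc (q ^+ 2) Cs) Es) k) n).
  by apply: conv_ext => // k; case: (qsys k) => _ _ h3 _; rewrite h3.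
rewrite conv_addr conv_delr conv_scr conv_shr; congr (_ + _ *: _).
case: n => // n /=; rewrite -convA; apply: conv_ext => // k; exact: e1.
Qed.
Lemma claim2 n : As n = sc (q ^- 2) dd n + sh (conv (conv Es dd) Cs) n.
Proof.
transitivity (conv del As n); first by rewrite conv_dell.
transitivity (conv (conv (sc (q ^- 2) dd) (sc (q ^- 2) Bs)) As n).
  by apply: conv_ext => // k; rewrite conv_sdB.
rewrite convA.
transitivity (conv (sc (q ^- 2) dd) (fun k => del k + sh (conv (sc (q ^- 2) Es) Cs) k) n).
  by apply: conv_ext => // k; rewrite R4.
rewrite conv_addr conv_delr conv_shr; congr (_ + _).
case: n => // n /=; rewrite -convA; apply: conv_ext => // k; exact: e2.
Qed.

Lemma emb_nil : emb ([::] : V F) = 0.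
Proof. by rewrite embE big_nil. Qed.
Lemma emb_triple n f : emb (triple_sum n f) =
  \sum_(i <- iota 0 n.+1) \sum_(j <- iota 0 n.+1) \sum_(k <- iota 0 n.+1)
     (if (i + j + k).+1 == n then emb (f i j k) else 0).
Proof.
rewrite /triple_sum emb_sum; apply: eq_bigr => i _.
rewrite emb_sum; apply: eq_bigr => j _.
rewrite emb_sum; apply: eq_bigr => k _.
by case: ifP => _; rewrite ?emb_nil.
Qed.
Lemma exch3 n (G : nat -> nat -> nat -> A) :
  \sum_(i <- iota 0 n) \sum_(j <- iota 0 n) \sum_(k <- iota 0 n) G i j k =
  \sum_(k <- iota 0 n) \sum_(j <- iota 0 n) \sum_(i <- iota 0 n) G i j k.
Proof.
rewrite (eq_bigr (fun i => \sum_(k <- iota 0 n) \sum_(j <- iota 0 n) G i j k)); last first.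
  by move=> i _; rewrite exchange_big.
rewrite exchange_big; apply: eq_bigr => k _; exact: exchange_big.
Qed.

Lemma main n :
  veq (Gw F n)
      (vadd (vscale (q ^ (2 * n%:Z)) (D q n))
            (vscale (q ^+ 2) (triple_sum n (fun i j k =>
               star q (star q (Wneg F i) (D q j)) (Wpos F k)))))
  /\
  veq (Gw F n)
      (vadd (vscale (q ^ (- (2 * n%:Z))) (D q n))
            (triple_sum n (fun i j k =>
               star q (star q (Wpos F k) (D q j)) (Wneg F i)))).
Proof.
have hz : q ^ (2 * n%:Z) = (q ^+ 2) ^+ n by rewrite -PoszM -exprnP exprM.
have hz' : q ^ (- (2 * n%:Z)) = (q ^- 2) ^+ n.
  by rewrite -PoszM -exprnN exprVn -exprM.
split; apply: veqP; rewrite emb_add !emb_scale emb_triple emb_word -/(As n).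
  rewrite hz (claim1 n); congr (_ + _ *: _).
  rewrite trisum; case: n {hz hz'} => // m /=.
  rewrite /conv; apply: eq_bigr => l _; rewrite mulr_suml; apply: eq_bigr => a _.
  by rewrite !emb_star /dd /Wneg /Wpos !emb_word.
rewrite hz' (claim2 n); congr (_ + _).
rewrite exch3.
rewrite (eq_bigr (fun k => \sum_(j <- iota 0 n.+1) \sum_(i <- iota 0 n.+1)
   (if (k + j + i).+1 == n then emb (star q (star q (Wpos F k) (D q j)) (Wneg F i)) else 0)));
  last first.
  move=> k _; apply: eq_bigr => j _; apply: eq_bigr => i _.
  by rewrite (addnC k) (addnC (j + k)) addnA.
rewrite trisum; case: n {hz hz'} => // m /=.
rewrite /conv; apply: eq_bigr => l _; rewrite mulr_suml; apply: eq_bigr => a _.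
by rewrite !emb_star /dd /Wneg /Wpos !emb_word.
Qed.
End S.

Theorem theorem9p15 (F : fieldType) (q : F) (hq0 : q != 0)
    (hq : forall m : nat, (0 < m)%N -> q ^+ m != 1) (n : nat) :
  veq (Gw F n)
      (vadd (vscale (q ^ (2 * n%:Z)) (D q n))
            (vscale (q ^+ 2) (triple_sum n (fun i j k =>
               star q (star q (Wneg F i) (D q j)) (Wpos F k)))))
  /\
  veq (Gw F n)
      (vadd (vscale (q ^ (- (2 * n%:Z))) (D q n))
            (triple_sum n (fun i j k =>
               star q (star q (Wpos F k) (D q j)) (Wneg F i)))).
Proof. exact: (main hq0 n). Qed.
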